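(* For all $\alpha\in[-1,1]$, $1-3P(\alpha)\ge\frac{1-\alpha}{2}$, where $$P(\alpha)=\frac19+\frac{\arcsin\alpha+\arcsin\frac{\alpha}{2}}{4\pi}+\frac{(\arcsin\alpha)^2-(\arcsin\frac{\alpha}{2})^2}{4\pi^2}.$$ *)

(* Defs.v *)
From Stdlib Require Import Reals Lra.
Open Scope R_scope.

Definition P (a : R) : R :=
  1/9 + (asin a + asin (a/2)) / (4*PI)
      + ((asin a)^2 - (asin (a/2))^2) / (4*PI^2).

(* Main.v *)
Require Import Defs.
From Stdlib Require Import Reals Lra Psatz.
Open Scope R_scope.

Lemma PI_bounds : 314/100 < PI < 315/100.
Proof.
  destruct (PI_2_3_7_ineq 1) as [H1 H2].
  unfold tg_alt, PI_2_3_7_tg, Ratan_seq in H1, H2; simpl in H1, H2.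
  split; lra.
Qed.

Lemma der_h (k x : R) : derivable_pt_lim (fun z => sin z - k * z) x (cos x - k).
Proof.
  replace (cos x - k) with (cos x - k * 1) by ring.
  apply (derivable_pt_lim_minus sin (fun z => k * z)).
  - apply derivable_pt_lim_sin.
  - apply (derivable_pt_lim_scal id k x 1). apply derivable_pt_lim_id.
Qed.

Lemma mvt_h (k a b : R) : a < b ->
  exists c, (sin b - k * b) - (sin a - k * a) = (cos c - k) * (b - a) /\ a < c < b.
Proof.
  intros Hab. apply (MVT_cor2 (fun z => sin z - k * z) (fun z => cos z - k) a b Hab).
  intros c _. apply der_h.
Qed.

Lemma cos_ge_PI6 (c : R) : - (PI/6) <= c <= PI/6 -> sqrt 3 / 2 <= cos c.
Proof.
  intros Hc. pose proof PI_bounds. rewrite <- cos_PI6.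
  destruct (Rle_dec 0 c).
  - apply cos_decr_1; lra.
  - rewrite <- (cos_neg c). apply cos_decr_1; lra.
Qed.

Lemma Q1 (y : R) : - (PI/6) <= y <= 0 -> -1/2 + sqrt 3 / 2 * (y + PI/6) <= sin y.
Proof.
  intros Hy. pose proof PI_bounds.
  destruct (Req_dec y (-(PI/6))) as [E|E].
  - subst y. rewrite sin_neg, sin_PI6. lra.
  - destruct (mvt_h (sqrt 3 / 2) (-(PI/6)) y) as [c [Hc1 Hc2]]; [lra|].
    rewrite sin_neg, sin_PI6 in Hc1.
    assert (sqrt 3 / 2 <= cos c) by (apply cos_ge_PI6; lra).
    nra.
Qed.

Lemma Q2 (y : R) : 0 <= y <= PI/6 -> 3 / PI * y <= sin y.
Proof.
  intros Hy. pose proof PI_bounds.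
  assert (HPI : 3 / PI * (PI/6) = 1/2) by (field; lra).
  destruct (Req_dec y 0) as [E|E].
  { subst y. rewrite sin_0. lra. }
  destruct (Req_dec y (PI/6)) as [E2|E2].
  { subst y. rewrite sin_PI6. lra. }
  destruct (mvt_h (3/PI) 0 y) as [c1 [H1 H1']]; [lra|].
  destruct (mvt_h (3/PI) y (PI/6)) as [c2 [H2 H2']]; [lra|].
  rewrite sin_0, sin_PI6 in *.
  assert (cos c2 <= cos c1) by (apply cos_decr_1; lra).
  apply Rnot_lt_le; intro Hlt.
  assert (cos c1 - 3/PI < 0) by nra.
  nra.
Qed.

Lemma cos_upper (t : R) : 0 <= t <= PI/2 -> cos t <= 1 - t^2/2 + t^4/24.
Proof.
  intros Ht. pose proof PI_bounds.
  destruct (cos_bound t 0 ltac:(lra) ltac:(lra)) as [_ H2].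
  unfold cos_approx, cos_term in H2; simpl in H2.
  assert (0 <= t^2 <= 4) by nra.
  lra.
Qed.

Lemma cos_lower (t : R) : 0 <= t <= PI/2 -> 1 - t^2/2 <= cos t.
Proof.
  intros Ht. pose proof PI_bounds.
  destruct (cos_bound t 0 ltac:(lra) ltac:(lra)) as [H1 _].
  unfold cos_approx, cos_term in H1; simpl in H1.
  assert (0 <= t^2 <= 4) by nra.
  lra.
Qed.

Theorem mainTheorem10 (a : R) (ha : -1 <= a <= 1) :
  1 - 3 * P a >= (1 - a) / 2.
Proof.
  pose proof PI_bounds as HPI.
  unfold P.
  set (x := asin a). set (y := asin (a/2)).
  assert (Hsx : sin x = a) by (apply sin_asin; lra).
  assert (Hsy : sin y = a/2) by (apply sin_asin; lra).
  assert (Hx := asin_bound a). fold x in Hx.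
  assert (Hy0 := asin_bound (a/2)). fold y in Hy0.
  assert (Hy : - (PI/6) <= y <= PI/6).
  { split; apply Rnot_lt_le; intro Hc.
    - assert (sin y < sin (-(PI/6))) by (apply sin_increasing_1; lra).
      rewrite sin_neg, sin_PI6 in H. lra.
    - assert (sin (PI/6) < sin y) by (apply sin_increasing_1; lra).
      rewrite sin_PI6 in H. lra. }
  assert (Hcos : cos (x + PI/2) = - a).
  { rewrite cos_plus, cos_PI2, sin_PI2, Hsx. ring. }
  assert (Key : 3 * (x + PI/2)^2 <= 4 * PI^2 * (1/6 + a/2) + 3 * (PI/2 - y)^2).
  { destruct (Rle_dec a 0) as [Ha|Ha].
    - assert (Hxn : x <= 0).
      { apply Rnot_lt_le; intro Hc.
        assert (sin 0 < sin x) by (apply sin_increasing_1; lra).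
        rewrite sin_0 in H; lra. }
      assert (Hyn : y <= 0).
      { apply Rnot_lt_le; intro Hc.
        assert (sin 0 < sin y) by (apply sin_increasing_1; lra).
        rewrite sin_0 in H; lra. }
      assert (HQ := Q1 y ltac:(lra)). rewrite Hsy in HQ.
      pose proof Rlt_sqrt3_0 as Hw0.
      set (w := sqrt 3) in *.
      assert (Hw2 : w * w = 3) by (apply sqrt_sqrt; lra).
      assert (Hw : 173/100 <= w <= 174/100).
      { split; apply Rnot_lt_le; intro Hc; nra. }
      set (th := x + PI/2) in *.
      assert (Hth : 0 <= th <= PI/2) by (unfold th; lra).
      set (s := 1 + a).
      assert (Hs : th^2/2 - th^4/24 <= s).
      { pose proof (cos_upper th Hth). unfold s. lra. }
      set (L := PI/2 - y).
      assert (HwL : 2 * PI * w / 3 - s <= w * L) by (unfold L, s; nra).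
      assert (Hpos : 0 <= 2 * PI * w / 3 - s) by (unfold s; nra).
      assert (h1 : 4 * PI^2 / 3 - 4 * PI * w / 3 * s + s^2 <= 3 * L^2).
      { assert ((2 * PI * w / 3 - s)^2 <= (w*L)^2) by nra.
        assert ((w*L)^2 = 3 * L^2) by (rewrite Rpow_mult_distr; simpl; nra).
        assert ((2 * PI * w / 3 - s)^2 = 4 * PI^2 / 3 - 4 * PI * w / 3 * s + s^2)
          by (simpl; nra).
        lra. }
      set (K := 2 * PI^2 - 4 * PI * w / 3).
      assert (HK : 11 <= K) by (unfold K; nra).
      assert (Hth2 : th^2 <= 25/10) by nra.
      assert (h3 : K * (th^2/2 - th^4/24) <= K * s) by nra.
      assert (h4 : 3 * th^2 <= K * (th^2/2 - th^4/24)).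
      { assert (0 <= th^2) by nra.
        assert (3 <= K * (1/2 - th^2/24)) by nra.
        replace (K * (th^2/2 - th^4/24)) with (th^2 * (K * (1/2 - th^2/24))) by (unfold K; field).
        nra. }
      assert (0 <= s^2) by nra.
      unfold K, s in *. nra.
    - assert (Hxn : 0 <= x).
      { apply Rnot_lt_le; intro Hc.
        assert (sin x < sin 0) by (apply sin_increasing_1; lra).
        rewrite sin_0 in H; lra. }
      assert (Hyn : 0 <= y).
      { apply Rnot_lt_le; intro Hc.
        assert (sin y < sin 0) by (apply sin_increasing_1; lra).
        rewrite sin_0 in H; lra. }
      assert (HQ := Q2 y ltac:(lra)). rewrite Hsy in HQ.
      assert (Hy2 : y <= PI * a / 6).
      { assert (3 * y <= PI * (a/2)).
        { replace (3*y) with (PI * (3 / PI * y)) by (field; lra). nra. }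
        lra. }
      set (r := PI/2 - x).
      assert (Hr : 0 <= r <= PI/2) by (unfold r; lra).
      assert (Hcr : cos r = a).
      { unfold r. rewrite cos_minus, cos_PI2, sin_PI2, Hsx. ring. }
      assert (Hd : 1 - a <= r^2/2) by (pose proof (cos_lower r Hr); lra).
      assert (HL : PI * (1/2 - a/6) <= PI/2 - y) by nra.
      assert (HL0 : 0 <= PI * (1/2 - a/6)) by nra.
      assert (h1 : 3 * (PI * (1/2 - a/6))^2 <= 3 * (PI/2 - y)^2) by nra.
      replace (x + PI/2) with (PI - r) by (unfold r; lra).
      set (d := 1 - a) in *.
      assert (Ha' : a = 1 - d) by (unfold d; ring).
      rewrite Ha' in h1.
      assert (Hd0 : 0 <= d) by (unfold d; lra).
      assert (h2 : 5/6 * PI^2 * r^2 + 3 * r^2 <= 6 * PI * r).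
      { assert (5/6 * PI^2 * r + 3 * r <= 6 * PI) by nra. nra. }
      assert (h3 : 5/3 * PI^2 * d <= 5/6 * PI^2 * r^2) by nra.
      rewrite Ha'. nra. }
  assert (Hgoal : 1 - 3 * (1/9 + (x + y)/(4*PI) + (x^2 - y^2)/(4*PI^2)) - (1 - a)/2
     = (4 * PI^2 * (1/6 + a/2) + 3 * (PI/2 - y)^2 - 3 * (x + PI/2)^2) / (4 * PI^2)).
  { field. lra. }
  apply Rle_ge.
  assert (0 <= (4 * PI^2 * (1/6 + a/2) + 3 * (PI/2 - y)^2 - 3 * (x + PI/2)^2) / (4 * PI^2)).
  { unfold Rdiv; apply Rmult_le_pos; [lra | apply Rlt_le, Rinv_0_lt_compat; nra]. }
  lra.
Qed.
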